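(* Let $G_{\mathrm{vc}}$ be a vertex-capacitated graph with node-weighting $A_{\mathrm{vc}}$, and $G_{\mathrm{ec}}$ the corresponding directed edge-capacitated graph with node-weighting $A_{\mathrm{ec}}$. Then: (1) If there is an $h\cdot s$-length moving cut $C$ of $G_{\mathrm{vc}}$ with $\mathrm{spars}_{(h,s)}(C,A_{\mathrm{vc}})<\phi$, then there exists an $h\cdot s$-length moving cut $C'$ of $G_{\mathrm{ec}}$ with $\mathrm{spars}_{(h,s)}(C',A_{\mathrm{ec}})<3\phi$. (2) If there is an $h\cdot s$-length moving cut $C'$ of $G_{\mathrm{ec}}$ with $\mathrm{spars}_{(h,s)}(C',A_{\mathrm{ec}})<\phi$, then there exists an $h\cdot s$-length moving cut $C$ of $G_{\mathrm{vc}}$ with $\mathrm{spars}_{(h,s)}(C,A_{\mathrm{vc}})<\phi$.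
   Context: Vertex-capacitated graph: finite undirected graph with positive integer lengths $\ell$ and capacities $u$ on vertices and edges; path length sums vertex and edge lengths. Corresponding directed graph $G_{\mathrm{ec}}$: for each vertex $v$, vertices $v_{\mathrm{in}},v_{\mathrm{mid}},v_{\mathrm{out}}$ and directed edges $(v_{\mathrm{in}},v_{\mathrm{mid}}),(v_{\mathrm{mid}},v_{\mathrm{out}}),(v_{\mathrm{in}},v_{\mathrm{out}})$ of length $\ell(v)$, capacity $u(v)$; for each edge $e=\{u,v\}$, directed edges $(u_{\mathrm{out}},v_{\mathrm{in}}),(v_{\mathrm{out}},u_{\mathrm{in}})$ of length $\ell(e)$, capacity $u(e)$; $A_{\mathrm{ec}}(v_{\mathrm{mid}})=A_{\mathrm{vc}}(v)$, zero elsewhere. General notions: demand $D\ge0$ on ordered pairs; $A$-respecting: $\max\{\sum_wD(v,w),\sum_wD(w,v)\}\le A(v)$; $h$-length: $D(v,w)>0\Rightarrow\mathrm{dist}(v,w)\le h$; symmetric: $D(v,w)=D(w,v)$. An $H$-length moving cut assigns each edge (and in $G_{\mathrm{vc}}$ also each vertex) $x$ a value $C(x)\in\{0,\tfrac1H,\dots\}\cap[0,1]$; $|C|=\sum_xu(x)C(x)$; $G-C$ has lengths $\ell(x)+H\cdot C(x)$; $\mathrm{sep}_{h'}(C,D)=\sum_{(u,v):\mathrm{dist}_{G-C}(u,v)>h'}D(u,v)$; $\mathrm{spars}_{h'}(C,D)=|C|/\mathrm{sep}_{h'}(C,D)$. For an $hs$-length cut $C$, $\mathrm{spars}_{(h,s)}(C,A)=\min\mathrm{spars}_{hs}(C,D)$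 over $A$-respecting $h$-length demands $D$, which in the directed graph $G_{\mathrm{ec}}$ are additionally required to be symmetric (zero separation counts as $+\infty$). *)

(* Defs.v *)
From HB Require Import structures.
From mathcomp Require Import all_boot all_order all_algebra.
From mathcomp Require Import boolp classical_sets constructive_ereal reals ereal.
Set Implicit Arguments. Unset Strict Implicit. Unset Printing Implicit Defensive.
Import Order.TTheory GRing.Theory Num.Theory.
Local Open Scope ring_scope.

Section Defs.
Variable R : realType.

Definition mcut_val (H : nat) (c : R) : Prop :=
  (exists k : nat, c = k%:R / H%:R) /\ 0 <= c <= 1.

Definition demand (W : finType) (D : W -> W -> R) : Prop :=
  forall x y, 0 <= D x y.

Definition respecting (W : finType) (A : W -> R) (D : W -> W -> R) : Prop :=
  forall v, Num.max (\sum_w D v w) (\sum_w D w v) <= A v.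

Definition hlength (W : finType) (dist : W -> W -> \bar R) (h : nat)
    (D : W -> W -> R) : Prop :=
  forall v w, 0 < D v w -> (dist v w <= (h%:R)%:E)%E.

Definition symmetric_demand (W : finType) (D : W -> W -> R) : Prop :=
  forall v w, D v w = D w v.

(* sep_{h'}(C,D), where [distC] is the distance in G - C. *)
Definition sep (W : finType) (distC : W -> W -> \bar R) (h' : nat)
    (D : W -> W -> R) : R :=
  \sum_(v : W) \sum_(w : W | ((h'%:R)%:E < distC v w)%E) D v w.

Definition ratio (sizeC sepCD : R) : \bar R :=
  if sepCD == 0 then +oo%E else (sizeC / sepCD)%:E.

Definition spars_hs (W : finType) (dist distC : W -> W -> \bar R)
    (sizeC : R) (A : W -> R) (symm : bool) (h s : nat) : \bar R :=
  ereal_inf [set r | exists D : W -> W -> R,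
    [/\ demand D, respecting A D, hlength dist h D,
        (symm -> symmetric_demand D) &
        r = ratio sizeC (sep distC (h * s) D)]]%classic.

(* V : vertices, E : edges (2-element subsets of V).                  *)
Section VC.
Variables (V : finType) (E : {set {set V}}).

Definition vc_adj (x y : V) : bool := [set x; y] \in E.

Fixpoint vc_wlen (lenV : V -> R) (lenE : {set V} -> R) (v : V) (p : seq V)
    : R :=
  match p with
  | [::] => lenV v
  | w :: p' => lenV v + lenE [set v; w] + vc_wlen lenV lenE w p'
  end.

Definition vc_dist (lenV : V -> R) (lenE : {set V} -> R) (v w : V) : \bar R :=
  if v == w then 0%E else
  ereal_inf [set (vc_wlen lenV lenE v p)%:E |
               p in [set p : seq V | path vc_adj v p && (last v p == w)]]%classic.

Definition vc_mcut (H : nat) (CV : V -> R) (CE : {set V} -> R) : Prop :=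
  (forall v, mcut_val H (CV v)) /\ (forall e, e \in E -> mcut_val H (CE e)).

Definition vc_size (uV : V -> nat) (uE : {set V} -> nat)
    (CV : V -> R) (CE : {set V} -> R) : R :=
  \sum_(v : V) (uV v)%:R * CV v + \sum_(e in E) (uE e)%:R * CE e.

Definition vc_dist0 (lV : V -> nat) (lE : {set V} -> nat) : V -> V -> \bar R :=
  vc_dist (fun v => (lV v)%:R) (fun e => (lE e)%:R).

Definition vc_distC (lV : V -> nat) (lE : {set V} -> nat) (H : nat)
    (CV : V -> R) (CE : {set V} -> R) : V -> V -> \bar R :=
  vc_dist (fun v => (lV v)%:R + H%:R * CV v) (fun e => (lE e)%:R + H%:R * CE e).

Definition vc_spars (lV uV : V -> nat) (lE uE : {set V} -> nat) (A : V -> R)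
    (h s : nat) (CV : V -> R) (CE : {set V} -> R) : \bar R :=
  spars_hs (vc_dist0 lV lE) (vc_distC lV lE (h * s) CV CE)
    (vc_size uV uE CV CE) A false h s.

End VC.

Section Directed.
Variables (W : finType) (arc : rel W).

Fixpoint d_wlen (len : W -> W -> R) (x : W) (p : seq W) : R :=
  match p with
  | [::] => 0
  | y :: p' => len x y + d_wlen len y p'
  end.

Definition d_dist (len : W -> W -> R) (x y : W) : \bar R :=
  ereal_inf [set (d_wlen len x p)%:E |
               p in [set p : seq W | path arc x p && (last x p == y)]]%classic.

Definition d_mcut (H : nat) (C : W -> W -> R) : Prop :=
  forall x y, arc x y -> mcut_val H (C x y).

Definition d_size (u : W -> W -> nat) (C : W -> W -> R) : R :=
  \sum_(x : W) \sum_(y : W | arc x y) (u x y)%:R * C x y.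

(* spars_{(h,s)}(C, A) in the directed graph: demands must be symmetric *)
Definition d_spars (l u : W -> W -> nat) (A : W -> R) (h s : nat)
    (C : W -> W -> R) : \bar R :=
  spars_hs (d_dist (fun x y => (l x y)%:R))
    (d_dist (fun x y => (l x y)%:R + (h * s)%:R * C x y))
    (d_size u C) A true h s.

End Directed.

(* Vertex (v, i) with i = 0, 1, 2 stands for v_in, v_mid, v_out.       *)
Section EC.
Variables (V : finType) (E : {set {set V}}).

Definition ec_arc : rel (V * 'I_3) := fun x y =>
  ((x.1 == y.1) &&
     [|| (x.2 == 0 :> nat) && (y.2 == 1 :> nat),
         (x.2 == 1 :> nat) && (y.2 == 2 :> nat)
       | (x.2 == 0 :> nat) && (y.2 == 2 :> nat)])
  || [&& (x.2 == 2 :> nat), (y.2 == 0 :> nat) & [set x.1; y.1] \in E].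

Definition ec_fun (fV : V -> nat) (fE : {set V} -> nat) (x y : V * 'I_3)
    : nat :=
  if x.1 == y.1 then fV x.1 else fE [set x.1; y.1].

Definition ec_weight (A : V -> R) (x : V * 'I_3) : R :=
  if (x.2 == 1 :> nat) then A x.1 else 0.

End EC.

End Defs.

(* Main.v *)
Require Import Defs.
From HB Require Import structures.
From mathcomp Require Import all_boot all_order all_algebra.
From mathcomp Require Import boolp classical_sets constructive_ereal reals ereal.
From mathcomp Require Import lra ring.
Import Order.TTheory GRing.Theory Num.Theory.
Local Open Scope ring_scope.

Module Aux.
Set Implicit Arguments. Unset Strict Implicit. Unset Printing Implicit Defensive.

Section Paths.
Variables (R : realType) (V : finType) (E : {set {set V}}).
Hypothesis hE : forall e, e \in E -> (#|e| = 2)%N.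

Definition i0 : 'I_3 := @Ordinal 3 0 isT.
Definition i1 : 'I_3 := @Ordinal 3 1 isT.
Definition i2 : 'I_3 := @Ordinal 3 2 isT.

Lemma set2_neq (u z : V) : [set u; z] \in E -> u != z.
Proof.
move=> /hE h; apply/eqP => uz; move: h; by rewrite uz finset.setUid cards1.
Qed.

Lemma ec_arcP (u z : V) (i j : 'I_3) : ec_arc E (u, i) (z, j) ->
  [\/ [/\ u = z, i = i0 & j = i1], [/\ u = z, i = i1 & j = i2],
      [/\ u = z, i = i0 & j = i2] | [/\ i = i2, j = i0 & [set u; z] \in E]].
Proof.
rewrite /ec_arc /=.
case/orP => [/andP[/eqP-> /or3P[]] | /and3P[hi hj he]].
- by case/andP => /eqP hi /eqP hj; apply: Or41; split => //; apply/val_inj.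
- by case/andP => /eqP hi /eqP hj; apply: Or42; split => //; apply/val_inj.
- by case/andP => /eqP hi /eqP hj; apply: Or43; split => //; apply/val_inj.
by apply: Or44; split => //; apply/val_inj; apply/eqP.
Qed.

Lemma ec_arc01 u : ec_arc E (u, i0) (u, i1). Proof. by rewrite /ec_arc /= eqxx. Qed.
Lemma ec_arc12 u : ec_arc E (u, i1) (u, i2). Proof. by rewrite /ec_arc /= eqxx. Qed.
Lemma ec_arc02 u : ec_arc E (u, i0) (u, i2). Proof. by rewrite /ec_arc /= eqxx. Qed.
Lemma ec_arc20 u z : [set u; z] \in E -> ec_arc E (u, i2) (z, i0).
Proof. by move=> h; rewrite /ec_arc /= h orbT. Qed.

Local Notation W := (V * 'I_3)%type.

Section Down.
Variables (a : V -> R) (b : {set V} -> R) (len : W -> W -> R).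
Hypothesis ha : forall u, 0 <= a u.
Hypothesis hI : forall u i j, ec_arc E (u, i) (u, j) -> a u <= len (u, i) (u, j).
Hypothesis hEd : forall u z, [set u; z] \in E -> b [set u; z] <= len (u, i2) (z, i0).

Definition credit (x : W) (q : seq W) : R :=
  if x.2 == i0 then 0 else if (x.2 == i1) && (q != [::]) then 0 else a x.1.

Lemma down_gen w q : forall x, path (ec_arc E) x q -> last x q = (w, i1) ->
  exists p, [/\ path (vc_adj E) x.1 p, last x.1 p = w &
     vc_wlen a b x.1 p <= d_wlen len x q + credit x q].
Proof.
elim: q => [|y q IH] [u i] /=.
  move=> _ [-> ->]; exists [::]; split => //=.
  by rewrite /credit /= add0r.
case/andP => hxy hp hl; have [p [pp pl pw]] := IH y hp hl.
move: hxy pp pl pw; case: y {hp hl} => z j hxy.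
case/ec_arcP: hxy => [[<- -> ->]|[<- -> ->]|[<- -> ->]|[-> -> he]] /= pp pl pw.
- exists p; split => //; apply: (le_trans pw); rewrite /credit /=.
  have := hI (ec_arc01 u); have := ha u; case: ifP => _; lra.
- exists p; split => //; move: pw; rewrite /credit /=.
  have := hI (ec_arc12 u); lra.
- exists p; split => //; move: pw; rewrite /credit /=.
  have := hI (ec_arc02 u); lra.
- exists (z :: p); split => //=; first by rewrite /vc_adj he.
  move: pw; rewrite /credit /=; have := hEd he; lra.
Qed.

Lemma down v w : v != w ->
  (vc_dist E a b v w <= d_dist (ec_arc E) len (v, i1) (w, i1))%E.
Proof.
move=> vw; rewrite /vc_dist (negbTE vw); apply/ereal_infP => r [q /andP[hq /eqP hl] <-].
have [p [pp pl pw]] := down_gen hq hl.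
have qn : q != [::].
  by apply/eqP => q0; move: hl; rewrite q0 /= => -[] h; rewrite h eqxx in vw.
apply: ge_ereal_inf; exists (vc_wlen a b v p)%:E.
  by exists p => //; rewrite /= pp pl eqxx.
by rewrite lee_fin; move: pw; rewrite /credit /= qn addr0.
Qed.
End Down.

Fixpoint tailp (x : V) (p : seq V) : seq W :=
  match p with [::] => [:: (x, i1)] | y :: p' => (x, i2) :: (y, i0) :: tailp y p' end.

Lemma tailp_path x p : path (vc_adj E) x p -> path (ec_arc E) (x, i0) (tailp x p).
Proof.
elim: p x => [|y p IH] x /=; first by rewrite ec_arc01.
case/andP => hxy hp; rewrite ec_arc02 ec_arc20 //=; exact: IH.
Qed.

Lemma tailp_last x p : last (x, i0) (tailp x p) = (last x p, i1).
Proof. by elim: p x => [|y p IH] x //=. Qed.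

Section Up.
Variables (a : V -> R) (b : {set V} -> R) (len : W -> W -> R).
Hypothesis hI : forall u i j, ec_arc E (u, i) (u, j) -> len (u, i) (u, j) <= a u.
Hypothesis hEd : forall u z, [set u; z] \in E -> len (u, i2) (z, i0) <= b [set u; z].

Lemma tailp_len x p : path (vc_adj E) x p -> d_wlen len (x, i0) (tailp x p) <= vc_wlen a b x p.
Proof.
elim: p x => [|y p IH] x /=; first by move=> _; rewrite addr0; exact: (hI (ec_arc01 x)).
case/andP => hxy hp; have := IH _ hp; have := hI (ec_arc02 x); have := hEd hxy; lra.
Qed.

Lemma up v w : v != w ->
  (d_dist (ec_arc E) len (v, i1) (w, i1) <= vc_dist E a b v w)%E.
Proof.
move=> vw; rewrite /vc_dist (negbTE vw); apply/ereal_infP => r [p /andP[hp /eqP hl] <-].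
case: p hp hl => [|y p] /=; first by move=> _ h; rewrite h eqxx in vw.
case/andP => hvy hp hl.
apply: ge_ereal_inf; exists (d_wlen len (v, i1) ((v, i2) :: (y, i0) :: tailp y p))%:E.
  exists ((v, i2) :: (y, i0) :: tailp y p) => //.
  by rewrite /= ec_arc12 ec_arc20 // tailp_path //= tailp_last hl eqxx.
rewrite lee_fin /=; have := tailp_len hp; have := hI (ec_arc12 v); have := hEd hvy; lra.
Qed.
End Up.

Lemma d_dist_refl (len : W -> W -> R) x : (d_dist (ec_arc E) len x x <= 0)%E.
Proof. by apply: ge_ereal_inf; exists 0%E => //; exists [::] => //=; rewrite eqxx. Qed.

Lemma vc_dist_refl (a : V -> R) b v : vc_dist E a b v v = 0%E.
Proof. by rewrite /vc_dist eqxx. Qed.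

Lemma vc_wlen_rcons (a : V -> R) b v p z :
  vc_wlen a b v (rcons p z) = vc_wlen a b v p + b [set last v p; z] + a z.
Proof.
elim: p v => [|y p IH] v /=; first by [].
by rewrite IH !addrA.
Qed.

Lemma last_rev_belast (v : V) p : last (last v p) (rev (belast v p)) = v.
Proof.
case: p => [|y p] //=.
have H := congr1 (fun s => last y (rev s)) (lastI y p).
rewrite /= rev_cons last_rcons rev_rcons /= in H.
by rewrite rev_cons last_rcons.
Qed.

Lemma vc_wlen_rev (a : V -> R) b v p :
  vc_wlen a b (last v p) (rev (belast v p)) = vc_wlen a b v p.
Proof.
elim: p v => [|y p IH] v //=.
rewrite rev_cons vc_wlen_rcons IH.
have -> : last (last y p) (rev (belast y p)) = y by exact: last_rev_belast.
by rewrite [[set y; v]]finset.setUC; ring.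
Qed.

Lemma vc_adj_sym : symmetric (vc_adj E).
Proof. by move=> x y; rewrite /vc_adj finset.setUC. Qed.

Lemma vc_dist_sym_le (a : V -> R) b v w : (vc_dist E a b w v <= vc_dist E a b v w)%E.
Proof.
rewrite /vc_dist; case: (eqVneq v w) => [//|vw].
apply/ereal_infP => r [p /andP[hp /eqP hl] <-].
apply: ge_ereal_inf; exists (vc_wlen a b v p)%:E => //.
exists (rev (belast v p)); last by rewrite -hl vc_wlen_rev.
rewrite /= -hl rev_path last_rev_belast eqxx andbT.
by rewrite (eq_path (e' := vc_adj E)) // => x y /=; rewrite vc_adj_sym.
Qed.

Lemma vc_dist_sym (a : V -> R) b v w : vc_dist E a b w v = vc_dist E a b v w.
Proof. by apply/eqP; rewrite eq_le !vc_dist_sym_le. Qed.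

End Paths.

Section Sums.
Variables (R : realType) (V : finType) (E : {set {set V}}).
Hypothesis hE : forall e, e \in E -> (#|e| = 2)%N.
Local Notation W := (V * 'I_3)%type.

Lemma sum_pair (G : W -> R) : \sum_(y : W) G y = \sum_z \sum_(j : 'I_3) G (z, j).
Proof. by rewrite (pair_bigA _ (fun z j => G (z, j))); apply: eq_bigr; case. Qed.

Lemma sum_I3 (G : 'I_3 -> R) : \sum_j G j = G i0 + G i1 + G i2.
Proof.
rewrite !big_ord_recl big_ord0 addr0 addrA.
by congr (G _ + G _ + G _); apply: val_inj.
Qed.

Lemma sum_mid (f : V -> R) : \sum_(y : W) (if y.2 == i1 then f y.1 else 0) = \sum_w f w.
Proof.
rewrite -(pair_bigA _ (fun w (j : 'I_3) => if j == i1 then f w else 0)) /=.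
by apply: eq_bigr => w _; rewrite -big_mkcond big_pred1_eq.
Qed.

Lemma sum_pick (u : V) (c : V -> R) : \sum_z (if u == z then c z else 0) = c u.
Proof. by rewrite -big_mkcond /= (eq_bigl (fun z => z == u)) ?big_pred1_eq // => z; rewrite eq_sym. Qed.

Lemma arc_sum (F : W -> W -> R) :
  \sum_(x : W) \sum_(y | ec_arc E x y) F x y =
  \sum_u (F (u, i0) (u, i1) + F (u, i1) (u, i2) + F (u, i0) (u, i2)) +
  \sum_u \sum_(z | [set u; z] \in E) F (u, i2) (z, i0).
Proof.
rewrite -big_split /= sum_pair; apply: eq_bigr => u _.
rewrite sum_I3 !(big_mkcond (ec_arc E _)) !sum_pair -!big_split /=.
under eq_bigr => z _ do rewrite !sum_I3 /ec_arc /= ?andbT ?andbF ?orbF /= ?andbF ?orbF ?orFb ?addr0 ?add0r.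
rewrite !big_split /= !sum_pick -big_mkcond /=; ring.
Qed.

Lemma edge_partition (H : V * V -> R) :
  \sum_u \sum_(z | [set u; z] \in E) H (u, z) =
  \sum_(e in E) \sum_(p : V * V | [set p.1; p.2] == e) H p.
Proof.
rewrite (pair_big_dep xpredT (fun u z => [set u; z] \in E) (fun u z => H (u, z))) /=.
rewrite (partition_big (fun p : V * V => [set p.1; p.2]) (mem E)) //.
apply: eq_bigr => e he; apply: eq_big => [p|[u z] _ //].
have he' : e \in E := he.
by case: eqP => [->|]; rewrite ?andbF // he'.
Qed.

Lemma card_pairs e : e \in E -> (#|[set p : V * V | [set p.1; p.2] == e]| <= 2)%N.
Proof.
move=> he; set A := [set p : V * V | _].
rewrite -(hE he) -(card_in_imset (f := fst)); last first.
  move=> [u z] [u' z']; rewrite !inE /= => /eqP h1 /eqP h2 eu; subst u'.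
  have : z \in [set u; z'] by rewrite h2 -h1 !inE eqxx orbT.
  rewrite !inE => /orP[/eqP zu|/eqP -> //].
  by move: (hE he); rewrite -h1 zu finset.setUid cards1.
apply: subset_leq_card; apply/fintype.subsetP => x /imsetP[[u z]]; rewrite inE /= => /eqP <- ->.
by rewrite !inE eqxx.
Qed.

Lemma edge_sum_le (G : {set V} -> R) (hG : forall e, e \in E -> 0 <= G e) :
  \sum_u \sum_(z | [set u; z] \in E) G [set u; z] <= 2 * \sum_(e in E) G e.
Proof.
rewrite (edge_partition (fun p => G [set p.1; p.2])) mulr_sumr.
apply: ler_sum => e he.
rewrite (eq_big (fun p : V * V => p \in [set p : V * V | [set p.1; p.2] == e]) (fun _ => G e)); last first.
- by move=> p /eqP ->.
- by move=> p; rewrite inE.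
rewrite sumr_const -[_ *+ _]mulr_natl; apply: ler_wpM2r; first exact: hG.
by rewrite ler_nat; exact: card_pairs.
Qed.
End Sums.


Section Main.
Variables (R : realType) (V : finType) (E : {set {set V}}).
Hypothesis hE : forall e, e \in E -> (#|e| = 2)%N.
Local Notation W := (V * 'I_3)%type.

Lemma sum_mid2 (F : W -> W -> R) (g : V -> V -> R) :
  (forall u i z j, F (u, i) (z, j) = if (i == i1) && (j == i1) then g u z else 0) ->
  \sum_x \sum_y F x y = \sum_v \sum_w g v w.
Proof.
move=> hF; rewrite -(sum_mid (fun v => \sum_w g v w)); apply: eq_bigr => -[u i] _ /=.
case: eqP => [->|ni].
  by rewrite -(sum_mid (g u)); apply: eq_bigr => -[z j] _; rewrite hF eqxx.
by apply: big1 => -[z j] _; rewrite hF; case: eqP.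
Qed.

Lemma mcut_ge0 H c : mcut_val (R:=R) H c -> 0 <= c.
Proof. by case=> _ /andP[]. Qed.

Lemma sum_ge0_2 (W' : finType) (P : W' -> W' -> bool) (D : W' -> W' -> R) :
  (forall x y, 0 <= D x y) -> 0 <= \sum_x \sum_(y | P x y) D x y.
Proof. by move=> hD; apply: sumr_ge0 => x _; apply: sumr_ge0 => y _. Qed.


Lemma spars_le (W' : finType) (dist distC : W' -> W' -> \bar R) (sizeC : R)
  (A' : W' -> R) (symm : bool) (h' s' : nat) (D : W' -> W' -> R) :
  demand D -> respecting A' D -> hlength dist h' D -> (symm -> symmetric_demand D) ->
  (spars_hs dist distC sizeC A' symm h' s' <= Defs.ratio sizeC (sep distC (h' * s') D))%E.
Proof. by move=> *; apply: ge_ereal_inf; exists (Defs.ratio sizeC (sep distC (h' * s') D)) => //; exists D. Qed.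

Variables (lV uV : V -> nat) (lE uE : {set V} -> nat) (A : V -> R) (h s : nat).
Hypothesis hA : forall v, 0 <= A v.

Lemma part1 (phi : R) (CV : V -> R) (CE : {set V} -> R) :
  vc_mcut E (h * s) CV CE ->
  (vc_spars E lV uV lE uE A h s CV CE < phi%:E)%E ->
  exists C' : W -> W -> R,
      d_mcut (ec_arc E) (h * s) C' /\
      (d_spars (ec_arc E) (ec_fun lV lE) (ec_fun uV uE) (ec_weight A) h s C'
         < (3 * phi)%:E)%E.
Proof.
move=> [hCV hCE] hsp.
have [r [D [hD hresp hlen _ ->]] hr] := ereal_inf_lt hsp.
set H := (h * s)%N.
set S := fun v w => ((H%:R)%:E < vc_distC E lV lE H CV CE v w)%E.
set sepD := sep (vc_distC E lV lE H CV CE) H D.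
set size := vc_size E uV uE CV CE.
move: hr; rewrite /Defs.ratio; case: eqP => [_|/eqP sep0]; first by rewrite ltNge leey.
rewrite lte_fin => hr.
pose C' (x y : W) := if x.1 == y.1 then CV x.1 else CE [set x.1; y.1].
pose D' (x y : W) := if (x.2 == i1) && (y.2 == i1) then (D x.1 y.1 + D y.1 x.1) / 2 else 0.
have hC' : d_mcut (ec_arc E) H C'.
  move=> [u i] [z j] /ec_arcP [[<- _ _]|[<- _ _]|[<- _ _]|[_ _ he]]; rewrite /C' /= ?eqxx //.
  by rewrite (negbTE (set2_neq hE he)); exact: hCE.
exists C'; split => //.
have hCE0 : forall e, e \in E -> 0 <= (uE e)%:R * CE e.
  by move=> e he; rewrite mulr_ge0 // (mcut_ge0 (hCE e he)).
have hsize0 : 0 <= size.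
  rewrite /size /vc_size addr_ge0 //; last exact: sumr_ge0.
  by apply: sumr_ge0 => v _; rewrite mulr_ge0 // (mcut_ge0 (hCV v)).
have hsize : d_size (ec_arc E) (ec_fun uV uE) C' <= 3 * size.
  rewrite /d_size arc_sum.
  have -> : \sum_u ((ec_fun uV uE (u, i0) (u, i1))%:R * C' (u, i0) (u, i1) +
               (ec_fun uV uE (u, i1) (u, i2))%:R * C' (u, i1) (u, i2) +
               (ec_fun uV uE (u, i0) (u, i2))%:R * C' (u, i0) (u, i2))
          = 3 * \sum_u (uV u)%:R * CV u.
    by rewrite mulr_sumr; apply: eq_bigr => u _; rewrite /ec_fun /C' /= eqxx; ring.
  have -> : \sum_u \sum_(z | [set u; z] \in E)
               (ec_fun uV uE (u, i2) (z, i0))%:R * C' (u, i2) (z, i0)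
          = \sum_u \sum_(z | [set u; z] \in E) (fun e => (uE e)%:R * CE e) [set u; z].
    apply: eq_bigr => u _; apply: eq_bigr => z hz.
    by rewrite /ec_fun /C' /= (negbTE (set2_neq hE hz)).
  have := edge_sum_le hE hCE0.
  have : 0 <= \sum_(e in E) (uE e)%:R * CE e by apply: sumr_ge0.
  rewrite /size /vc_size; lra.
pose lenC (x y : W) := (ec_fun lV lE x y)%:R + H%:R * C' x y.
have hdown : forall v w, v != w ->
    (vc_distC E lV lE H CV CE v w <= d_dist (ec_arc E) lenC (v, i1) (w, i1))%E.
  move=> v0 w0 vw.
  apply: (down (a := fun v => (lV v)%:R + H%:R * CV v)
               (b := fun e => (lE e)%:R + H%:R * CE e)) => //.
  - by move=> u; rewrite addr_ge0 // mulr_ge0 // (mcut_ge0 (hCV u)).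
  - by move=> u i j _; rewrite /lenC /ec_fun /C' /= eqxx.
  - by move=> u z hz; rewrite /lenC /ec_fun /C' /= (negbTE (set2_neq hE hz)).
pose g v w := if ((H%:R)%:E < d_dist (ec_arc E) lenC (v, i1) (w, i1))%E
              then (D v w + D w v) / 2 else 0.
have hsepE : sep (d_dist (ec_arc E) lenC) H D' = \sum_v \sum_w g v w.
  rewrite /sep; under eq_bigr => x _ do rewrite big_mkcond.
  apply: sum_mid2 => u i z j; rewrite /D' /g /=.
  case: (eqVneq i i1) => [->|ni]; case: (eqVneq j i1) => [->|nj] //=;
    by case: ifP.
have eD : sepD = \sum_v \sum_w (if S v w then D v w else 0).
  by rewrite /sepD /sep; apply: eq_bigr => v1 _; rewrite big_mkcond.
have eS : \sum_v \sum_w (if S v w then D w v else 0) =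
          \sum_v \sum_w (if S v w then D v w else 0).
  rewrite exchange_big; apply: eq_bigr => v1 _; apply: eq_bigr => w1 _.
  by rewrite /S /vc_distC vc_dist_sym.
have eH : \sum_v \sum_w (if S v w then (D v w + D w v) / 2 else 0) = sepD.
  have -> : \sum_v \sum_w (if S v w then (D v w + D w v) / 2 else 0) =
      (\sum_v \sum_w (if S v w then D v w else 0) +
       \sum_v \sum_w (if S v w then D w v else 0)) / 2.
    rewrite mulrDl !mulr_suml -big_split; apply: eq_bigr => v1 _.
    rewrite !mulr_suml -big_split; apply: eq_bigr => w1 _.
    by case: ifP => _; rewrite /= ?mulrDl ?mul0r ?addr0.
  by rewrite eS eD; field.
have hsep : sepD <= sep (d_dist (ec_arc E) lenC) H D'.
  rewrite hsepE -eH; apply: ler_sum => v1 _; apply: ler_sum => w1 _.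
  rewrite /g; case: ifP => hS.
    have vw : v1 != w1.
      by apply/eqP => e; move: hS; rewrite /S e /vc_distC vc_dist_refl lte_fin ltNge ler0n.
    by rewrite (lt_le_trans hS (hdown _ _ vw)).
  by case: ifP => // _; rewrite divr_ge0 // addr_ge0.
have sepD_pos : 0 < sepD.
  by rewrite lt_def sep0 /sepD /sep (sum_ge0_2 _ hD).
have hD' : demand D'.
  by move=> x y; rewrite /D'; case: ifP => // _; rewrite divr_ge0 // addr_ge0.
rewrite /d_spars.
have hle := @spars_le _ (d_dist (ec_arc E) (fun x y => (ec_fun lV lE x y)%:R)) (d_dist (ec_arc E) lenC)
   (d_size (ec_arc E) (ec_fun uV uE) C') (ec_weight A) true h s D' hD'.
apply: le_lt_trans (hle _ _ _) _.
- move=> [u i]; rewrite /ec_weight /=.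
  case: (eqVneq i i1) => [->|ni].
    have r1 : \sum_y D' (u, i1) y = \sum_w (D u w + D w u) / 2.
      rewrite -(sum_mid (fun w => (D u w + D w u) / 2)).
      by apply: eq_bigr => -[z j] _; rewrite /D' /=.
    have r2 : \sum_y D' y (u, i1) = \sum_w (D u w + D w u) / 2.
      rewrite -(sum_mid (fun w => (D u w + D w u) / 2)).
      by apply: eq_bigr => -[z j] _; rewrite /D' /= ?eqxx ?andbT addrC.
    rewrite r1 r2 maxxx /= -mulr_suml big_split /=.
    have := hresp u; rewrite ge_max => /andP[h1 h2]; lra.
  have i1F : (nat_of_ord i == 1%N) = false.
    by apply/negbTE; move: ni; apply: contra => /eqP e; apply/eqP/val_inj.
  rewrite i1F !big1 ?maxxx // => -[z j] _; rewrite /D' /= (negbTE ni) //.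
  by rewrite andbF.
- move=> [u i] [z j]; rewrite /D' /=.
  case: (eqVneq i i1) => [->|ni]; case: (eqVneq j i1) => [->|nj] /=; 
    rewrite ?ltxx // => hpos.
  case: (eqVneq u z) => [->|uz].
    by apply: le_trans (d_dist_refl _ _ _) _; rewrite lee_fin ler0n.
  have hvc : (vc_dist0 R E lV lE u z <= (h%:R)%:E)%E.
    have := hD u z; have := hD z u => h1 h2.
    case: (ltrP 0 (D u z)) => hp; first exact: hlen hp.
    have hp' : 0 < D z u by lra.
    by rewrite /vc_dist0 -vc_dist_sym; exact: hlen hp'.
  apply: le_trans hvc.
  apply: (up (a := fun v => (lV v)%:R) (b := fun e => (lE e)%:R)) => //.
  - by move=> v0 k l _; rewrite /ec_fun /= eqxx.
  - by move=> v0 w0 hz; rewrite /ec_fun /= (negbTE (set2_neq hE hz)).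
- by move=> _ x y; rewrite /D' andbC addrC.
have sep'pos : 0 < sep (d_dist (ec_arc E) lenC) H D' := lt_le_trans sepD_pos hsep.
rewrite -/lenC /Defs.ratio gt_eqF // lte_fin.
have hr' : size / sepD < phi := hr.
have hq0 : 0 <= size / sepD by rewrite divr_ge0 // ltW.
have eq : size = (size / sepD) * sepD by rewrite divfK // gt_eqF.
move: hr' hq0 eq; set q := size / sepD => hr' hq0 eq.
rewrite ltr_pdivrMr //.
move: hsize hsep sep'pos; rewrite /H.
set sz' := d_size _ _ _; set sp' := sep _ _ D' => hsize hsep sep'pos.
have : q * sepD <= q * sp' by rewrite ler_wpM2l.
have : q * sp' < phi * sp' by rewrite ltr_pM2r.
lra.
Qed.


Lemma mcut_max H a b : mcut_val (R:=R) H a -> mcut_val H b -> mcut_val H (Num.max a b).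
Proof. by move=> ha hb; rewrite /Order.max; case: ifP. Qed.

Lemma mcut0 H : mcut_val (R:=R) H 0.
Proof. by split; [exists 0%N; rewrite mul0r | rewrite lexx ler01]. Qed.

Lemma le_sum1P (T : finType) (P : pred T) (F : T -> R) y0 :
  (forall y, P y -> 0 <= F y) -> P y0 -> F y0 <= \sum_(y | P y) F y.
Proof.
move=> hF hy0; rewrite (bigD1 y0) //= lerDl; apply: sumr_ge0 => y /andP[hy _].
exact: hF.
Qed.

Lemma le_sum1 (T : finType) (F : T -> R) y0 :
  (forall y, 0 <= F y) -> F y0 <= \sum_y F y.
Proof. by move=> hF; apply: le_sum1P. Qed.

Lemma sum_mid_le (f : W -> R) : (forall y, 0 <= f y) -> \sum_w f (w, i1) <= \sum_y f y.
Proof.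
move=> hf; rewrite -(sum_mid (fun w => f (w, i1))); apply: ler_sum => -[z j] _ /=.
by case: eqP => [->|_]; [exact: lexx | exact: hf].
Qed.

Lemma part2 (phi : R) (C' : W -> W -> R) :
  d_mcut (ec_arc E) (h * s) C' ->
  (d_spars (ec_arc E) (ec_fun lV lE) (ec_fun uV uE) (ec_weight A) h s C' < phi%:E)%E ->
  exists (CV : V -> R) (CE : {set V} -> R),
      vc_mcut E (h * s) CV CE /\
      (vc_spars E lV uV lE uE A h s CV CE < phi%:E)%E.
Proof.
move=> hC' hsp.
have [r [D' [hD' hresp hlen _ ->]] hr] := ereal_inf_lt hsp.
set H := (h * s)%N.
move: hr; rewrite /Defs.ratio; case: eqP => [_|/eqP sep0]; first by rewrite ltNge leey.
rewrite lte_fin => hr.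
pose CV u := Num.max (Num.max (C' (u, i0) (u, i1)) (C' (u, i1) (u, i2))) (C' (u, i0) (u, i2)).
pose CE e := \big[Num.max/0]_(p : V * V | [set p.1; p.2] == e) C' (p.1, i2) (p.2, i0).
pose D v w := D' (v, i1) (w, i1).
have hC'0 : forall x y, ec_arc E x y -> 0 <= C' x y by move=> x y /hC' /mcut_ge0.
have hCV : forall u, mcut_val H (CV u).
  by move=> u; rewrite /CV; apply: mcut_max; [apply: mcut_max|]; apply: hC';
    [exact: ec_arc01 | exact: ec_arc12 | exact: ec_arc02].
have hCE : forall e, e \in E -> mcut_val H (CE e).
  move=> e he; rewrite /CE; apply: big_ind => //; [exact: mcut0 | exact: mcut_max|].
  by move=> [u z] /eqP /= hz; apply: hC'; apply: ec_arc20; rewrite hz.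
exists CV, CE; split => //.
have hCV0 : forall u, 0 <= CV u by move=> u; exact: mcut_ge0 (hCV u).
have hD : demand D by move=> v w; exact: hD'.
have hz1 : forall x y, x.2 != i1 -> D' x y = 0.
  move=> [u i] y /= ni; apply/eqP; rewrite eq_le hD' andbT.
  have := hresp (u, i); rewrite /ec_weight /=.
  have -> : (nat_of_ord i == 1%N) = false.
    by apply/negbTE; move: ni; apply: contra => /eqP e; apply/eqP/val_inj.
  rewrite ge_max => /andP[h1 _]; apply: le_trans h1.
  exact: (le_sum1 (F := D' (u, i))).
have hz2 : forall x y, y.2 != i1 -> D' x y = 0.
  move=> x [u i] /= ni; apply/eqP; rewrite eq_le hD' andbT.
  have := hresp (u, i); rewrite /ec_weight /=.
  have -> : (nat_of_ord i == 1%N) = false.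
    by apply/negbTE; move: ni; apply: contra => /eqP e; apply/eqP/val_inj.
  rewrite ge_max => /andP[_ h2]; apply: le_trans h2.
  exact: (le_sum1 (F := fun y => D' y (u, i))).
set S := fun v w => ((H%:R)%:E < vc_distC E lV lE H CV CE v w)%E.
pose lenC (x y : W) := (ec_fun lV lE x y)%:R + H%:R * C' x y.
have hup : forall v w, v != w ->
    (d_dist (ec_arc E) lenC (v, i1) (w, i1) <= vc_distC E lV lE H CV CE v w)%E.
  move=> v0 w0 vw.
  apply: (up (a := fun v => (lV v)%:R + H%:R * CV v)
               (b := fun e => (lE e)%:R + H%:R * CE e)) => //.
  - move=> u i j hij; rewrite /lenC /ec_fun /= eqxx lerD2l ler_wpM2l //.
    rewrite /CV; case/ec_arcP: hij => [[_ -> ->]|[_ -> ->]|[_ -> ->]|[_ _ he]].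
    + by rewrite !le_max lexx.
    + by rewrite !le_max lexx orbT.
    + by rewrite !le_max lexx orbT.
    + by move: (set2_neq hE he); rewrite eqxx.
  - move=> u z hz; rewrite /lenC /ec_fun /= (negbTE (set2_neq hE hz)) lerD2l ler_wpM2l //.
    by rewrite /CE; apply: (le_bigmax_cond _ (j := (u, z)) (fun p => C' (p.1, i2) (p.2, i0))).
pose sepD := sep (vc_distC E lV lE H CV CE) H D.
set sp' := sep _ _ D' in sep0 hr.
have hsep : sp' <= sepD.
  have -> : sp' = \sum_v \sum_w (if ((H%:R)%:E < d_dist (ec_arc E) lenC (v, i1) (w, i1))%E
                                 then D v w else 0).
    rewrite /sp' /sep; under eq_bigr => x _ do rewrite big_mkcond.
    apply: sum_mid2 => u i z j /=.
    case: (eqVneq i i1) => [->|ni]; last by rewrite hz1 //; case: ifP.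
    case: (eqVneq j i1) => [->|nj]; last by rewrite hz2 //; case: ifP.
    by [].
  rewrite /sepD /sep; apply: ler_sum => v1 _; rewrite [X in _ <= X]big_mkcond.
  apply: ler_sum => w1 _; case: ifP => hP; last by case: ifP.
  have vw : v1 != w1.
    apply/eqP => e; move: hP; rewrite e => hP.
    by have := lt_le_trans hP (d_dist_refl _ _ _); rewrite lte_fin ltNge ler0n.
  by rewrite (lt_le_trans hP (hup _ _ vw)).
set szv := vc_size E uV uE CV CE.
set sz' := d_size _ _ C' in hr.
have hCE0 : forall e, e \in E -> 0 <= CE e.
  move=> e he; rewrite /CE; apply: (big_ind (fun x : R => 0 <= x)) => //; first by move=> x y hx hy; rewrite le_max hx.
  by move=> [u z] /eqP /= hz; apply: hC'0; apply: ec_arc20; rewrite hz.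
have hsize0 : 0 <= szv.
  rewrite /szv /vc_size; apply: addr_ge0; apply: sumr_ge0 => v hv; rewrite mulr_ge0 //.
  exact: hCE0.
have hsize : szv <= sz'.
  rewrite /sz' /d_size arc_sum /szv /vc_size; apply: lerD.
    apply: ler_sum => u _; rewrite /ec_fun /= eqxx -!mulrDr ler_wpM2l //.
    have h1 := hC'0 _ _ (ec_arc01 E u); have h2 := hC'0 _ _ (ec_arc12 E u);
      have h3 := hC'0 _ _ (ec_arc02 E u).
    rewrite /CV !ge_max; apply/andP; split; first (apply/andP; split); lra.
  rewrite (edge_partition E (fun p => (ec_fun uV uE (p.1, i2) (p.2, i0))%:R * C' (p.1, i2) (p.2, i0))).
  apply: ler_sum => e he.
  apply: le_trans (_ : (uE e)%:R * \sum_(p : V * V | [set p.1; p.2] == e) C' (p.1, i2) (p.2, i0) <= _).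
    rewrite ler_wpM2l // /CE; apply: bigmax_le; first by apply: sumr_ge0 => -[u z] /eqP /= hz;
      apply: hC'0; apply: ec_arc20; rewrite hz.
    move=> p hp; apply: le_sum1P => // -[u z] /eqP /= hz.
    by apply: hC'0; apply: ec_arc20; rewrite hz.
  rewrite mulr_sumr; apply: ler_sum => -[u z] /eqP /= hz.
  by rewrite /ec_fun /= (negbTE (set2_neq hE (etrans (f_equal _ hz) _))) ?hz.
rewrite /vc_spars.
have hle := @spars_le _ (vc_dist0 R E lV lE) (vc_distC E lV lE H CV CE) szv A false h s D hD.
apply: le_lt_trans (hle _ _ _) _ => //.
- move=> v; rewrite ge_max; have := hresp (v, i1); rewrite ge_max /ec_weight /= => /andP[h1 h2].
  apply/andP; split.
    by apply: le_trans h1; exact: (sum_mid_le (f := D' (v, i1))).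
  by apply: le_trans h2; exact: (sum_mid_le (f := fun y => D' y (v, i1))).
- move=> v w hp; case: (eqVneq v w) => [->|vw].
    by rewrite /vc_dist0 vc_dist_refl lee_fin ler0n.
  apply: le_trans (hlen _ _ hp).
  apply: (down (a := fun v => (lV v)%:R) (b := fun e => (lE e)%:R)) => //.
  - by move=> u i j _; rewrite /ec_fun /= eqxx.
  - by move=> u z hz; rewrite /ec_fun /= (negbTE (set2_neq hE hz)).
have sp'pos : 0 < sp' by rewrite lt_def sep0 /sp' /sep (sum_ge0_2 _ hD').
have sepDpos : 0 < sepD := lt_le_trans sp'pos hsep.
rewrite /Defs.ratio gt_eqF // lte_fin ltr_pdivrMr //.
have hq0 : 0 <= sz' / sp'.
  apply: divr_ge0; last exact: ltW.
  rewrite /sz' /d_size; apply: sumr_ge0 => x _; apply: sumr_ge0 => y hy.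
  by rewrite mulr_ge0 // hC'0.
have eq : sz' = (sz' / sp') * sp' by rewrite divfK // gt_eqF.
move: hr hq0 eq; set q := sz' / sp' => hr hq0 eq.
have : q * sp' <= q * sepD by rewrite ler_wpM2l.
have : q * sepD < phi * sepD by rewrite ltr_pM2r.
rewrite -/H -/sepD; lra.
Qed.

End Main.

End Aux.

Theorem lemma4p8 (R : realType) (V : finType) (E : {set {set V}})
  (lV uV : V -> nat) (lE uE : {set V} -> nat) (A : V -> R) (h s : nat) (phi : R)
  (hE : forall e, e \in E -> (#|e| = 2)%N)
  (hlV : forall v, (0 < lV v)%N) (huV : forall v, (0 < uV v)%N)
  (hlE : forall e, e \in E -> (0 < lE e)%N)
  (huE : forall e, e \in E -> (0 < uE e)%N)
  (hA : forall v, 0 <= A v) (hh : (0 < h)%N) (hs : (0 < s)%N) :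
  ((exists (CV : V -> R) (CE : {set V} -> R),
      vc_mcut E (h * s) CV CE /\
      (vc_spars E lV uV lE uE A h s CV CE < phi%:E)%E) ->
   exists C' : V * 'I_3 -> V * 'I_3 -> R,
      d_mcut (ec_arc E) (h * s) C' /\
      (d_spars (ec_arc E) (ec_fun lV lE) (ec_fun uV uE) (ec_weight A) h s C'
         < (3 * phi)%:E)%E)
  /\
  ((exists C' : V * 'I_3 -> V * 'I_3 -> R,
      d_mcut (ec_arc E) (h * s) C' /\
      (d_spars (ec_arc E) (ec_fun lV lE) (ec_fun uV uE) (ec_weight A) h s C'
         < phi%:E)%E) ->
   exists (CV : V -> R) (CE : {set V} -> R),
      vc_mcut E (h * s) CV CE /\
      (vc_spars E lV uV lE uE A h s CV CE < phi%:E)%E).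
Proof.
split.
- move=> [CV [CE [hc hsp]]].
  exact: (Aux.part1 hE hc hsp).
- move=> [C' [hc hsp]].
  exact: (Aux.part2 hE hc hsp).
Qed.
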